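(* Let $q$ be a prime power, $n\ge1$, let $f(x)\in\mathbb{F}_{q^n}[x]$ be a permutation polynomial of $\mathbb{F}_{q^n}$, and let $m_1,\dots,m_n$ be positive integers. For $a_1,\dots,a_n,v_1,\dots,v_n\in\mathbb{F}_{q^n}$, the polynomial $$F(x)=a_1(\mathrm{Tr}(v_1f(x)))^{m_1}+\dots+a_n(\mathrm{Tr}(v_nf(x)))^{m_n}$$ is a permutation polynomial of $\mathbb{F}_{q^n}$ if and only if $\gcd(m_1m_2\cdots m_n,q-1)=1$ and both $\{a_1,\dots,a_n\}$ and $\{v_1,\dots,v_n\}$ are bases of $\mathbb{F}_{q^n}$ over $\mathbb{F}_q$.
   Context: $\mathrm{Tr}(x)=x+x^q+\dots+x^{q^{n-1}}$ is the trace from $\mathbb{F}_{q^n}$ to $\mathbb{F}_q$. A polynomial is a permutation polynomial of a finite field if the map it induces on that field is bijective. *)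

(* Defs.v *)
From mathcomp Require Import all_boot all_order all_algebra all_field.
Set Implicit Arguments. Unset Strict Implicit. Unset Printing Implicit Defensive.
Import GRing.Theory.
Local Open Scope ring_scope.

Definition trq (L : finFieldType) (q n : nat) (x : L) : L :=
  \sum_(i < n) x ^+ (q ^ i).

Definition inFq (L : finFieldType) (q : nat) (x : L) : Prop := x ^+ q = x.

Definition is_basis_over_Fq (L : finFieldType) (q n : nat) (a : 'I_n -> L) : Prop :=
  (forall c : 'I_n -> L, (forall i, inFq q (c i)) ->
     \sum_(i < n) c i * a i = 0 -> forall i, c i = 0) /\
  (forall x : L, exists c : 'I_n -> L,
     (forall i, inFq q (c i)) /\ x = \sum_(i < n) c i * a i).

Definition is_perm_poly (L : finFieldType) (f : {poly L}) : Prop :=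
  bijective (fun x : L => f.[x]).

Definition Fpoly (L : finFieldType) (q n : nat) (f : {poly L})
  (a v : 'I_n -> L) (m : 'I_n -> nat) : {poly L} :=
  \sum_(i < n) a i *: (\sum_(j < n) (v i *: f) ^+ (q ^ j)) ^+ m i.

(* Main.v *)
Require Import Defs.
From mathcomp Require Import all_boot all_order all_algebra all_field.
Set Implicit Arguments. Unset Strict Implicit. Unset Printing Implicit Defensive.
Import GRing.Theory.
Local Open Scope ring_scope.

Lemma chX (L : finFieldType) (q j : nat) : [pchar L].-nat q -> [pchar L].-nat (q ^ j)%N.
Proof. by move=> h; rewrite pnatX h; case: (j == 0)%N. Qed.

Lemma fixX (L : finFieldType) (q j : nat) (c : L) : c ^+ q = c -> c ^+ (q ^ j)%N = c.
Proof.
move=> h; elim: j => [|j IH]; first by rewrite expn0 expr1.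
by rewrite expnSr exprM IH h.
Qed.

Lemma tr0 (L : finFieldType) q n : (0 < q)%N -> trq q n (0 : L) = 0.
Proof. by move=> q0; rewrite /trq big1 // => i _; rewrite expr0n expn_eq0 eqn0Ngt q0. Qed.

Lemma trD (L : finFieldType) q n (x y : L) : [pchar L].-nat q ->
  trq q n (x + y) = trq q n x + trq q n y.
Proof. by move=> h; rewrite /trq -big_split; apply: eq_bigr => i _; rewrite exprDn_pchar ?chX. Qed.

Lemma trN (L : finFieldType) q n (x : L) : [pchar L].-nat q ->
  trq q n (- x) = - trq q n x.
Proof.
move=> h; rewrite /trq -sumrN; apply: eq_bigr => i _; rewrite exprNn_pchar ?chX //.
Qed.

Lemma trB (L : finFieldType) q n (x y : L) : [pchar L].-nat q ->
  trq q n (x - y) = trq q n x - trq q n y.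
Proof. by move=> h; rewrite trD // trN. Qed.

Lemma trZ (L : finFieldType) q n (c x : L) : c ^+ q = c ->
  trq q n (c * x) = c * trq q n x.
Proof. move=> h; rewrite /trq mulr_sumr; apply: eq_bigr => i _; rewrite exprMn (fixX _ h) //. Qed.

Lemma tr_sum (L : finFieldType) q n (I : finType) (F : I -> L) : [pchar L].-nat q ->
  (0 < q)%N -> trq q n (\sum_i F i) = \sum_i trq q n (F i).
Proof.
move=> h q0; apply: (big_morph (trq q n)) => [x y|]; [exact: trD | exact: tr0].
Qed.

Lemma frob_sum (L : finFieldType) q (I : finType) (F : I -> L) : [pchar L].-nat q ->
  (0 < q)%N -> (\sum_i F i) ^+ q = \sum_i (F i) ^+ q.
Proof.
move=> h q0; apply: (big_morph (fun x : L => x ^+ q)) => [x y|]; first exact: exprDn_pchar.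
by rewrite expr0n eqn0Ngt q0.
Qed.

Lemma tr_fix (L : finFieldType) q n (x : L) : [pchar L].-nat q -> (0 < q)%N ->
  #|L| = (q ^ n)%N -> (trq q n x) ^+ q = trq q n x.
Proof.
move=> h q0 hL; rewrite /trq frob_sum //.
case: n hL => [|n] hL; first by rewrite !big_ord0.
rewrite big_ord_recr /= [RHS]big_ord_recl /= -exprM -expnSr -hL expf_card addrC.
congr (_ + _); apply: eq_bigr => i _; by rewrite -exprM -expnSr.
Qed.


Lemma tr_nz (L : finFieldType) q n : (1 < q)%N -> (0 < n)%N -> #|L| = (q ^ n)%N ->
  exists z : L, trq q n z != 0.
Proof.
move=> q1 n0 hL; case: (pickP (fun z : L => trq q n z != 0)) => [z hz|H]; first by exists z.
exfalso.
pose P : {poly L} := \sum_(i < n) 'X^(q ^ i).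
have Pz z : P.[z] = trq q n z by rewrite /P horner_sum; apply: eq_bigr => i _; rewrite hornerXn.
have P0 : P != 0.
  apply/eqP => /(congr1 (fun p : {poly L} => p`_1)); rewrite coef0 /P coef_sum.
  clear -q1 n0; case: n n0 => // n _; rewrite big_ord_recl /= expn0 coefXn eqxx big1 ?addr0.
    by move/eqP; rewrite oner_eq0.
  move=> i _; rewrite coefXn; case: eqP => // h; exfalso.
  have : (q <= q ^ (bump 0 i))%N by rewrite -{1}(expn1 q) leq_pexp2l ?(ltnW q1).
  by rewrite -h leqNgt q1.
have := max_poly_roots P0 (rs := enum L).
rewrite enum_uniq -cardE hL => /(_ _ isT).
have -> : all (root P) (enum L).
  by apply/allP => z _; rewrite /root Pz; move: (H z) => /negbT; rewrite negbK.
move=> /(_ isT) h.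
have : (size P <= (q ^ n.-1).+1)%N.
  apply: leq_trans (size_sum _ _ _) _; apply/bigmax_leqP => i _.
  by rewrite size_polyXn ltnS leq_pexp2l ?(ltnW q1) // -ltnS prednK.
move=> /(leq_trans h); rewrite ltnS.
case: n n0 {H Pz hL h P P0} => // n _ /=; rewrite expnS leqNgt.
rewrite -[X in (X < _)%N]mul1n ltn_mul2r q1 expn_gt0 (ltnW q1) //.
Qed.


Definition Kset (L : finFieldType) (q : nat) := [set x : L | x ^+ q == x].

Lemma inK (L : finFieldType) q (x : L) : (x \in Kset L q) = (x ^+ q == x).
Proof. by rewrite inE. Qed.

Lemma cardK (L : finFieldType) q : (1 < q)%N -> (#|Kset L q| <= q)%N.
Proof.
move=> q1; pose P : {poly L} := 'X^q - 'X.
have sP : size P = q.+1.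
  by rewrite /P size_addl size_polyXn // size_polyN size_polyX ltnS.
have P0 : P != 0 by rewrite -size_poly_eq0 sP.
have := max_poly_roots P0 (rs := enum (Kset L q)).
rewrite enum_uniq -cardE sP ltnS; apply => //.
apply/allP => z; rewrite mem_enum inK /root /P !hornerE subr_eq0 //.
Qed.

Lemma K_qm1 (L : finFieldType) q (x : L) : (0 < q)%N -> x ^+ q = x -> x != 0 -> x ^+ (q - 1) = 1.
Proof.
move=> q0 h x0; apply: (mulIf x0); rewrite mul1r -exprSr subn1 prednK //.
Qed.

Lemma pow_inj (L : finFieldType) q m (x y : L) : (1 < q)%N -> (0 < m)%N ->
  coprime m (q - 1) -> x ^+ q = x -> y ^+ q = y -> x ^+ m = y ^+ m -> x = y.
Proof.
move=> q1 m0 cop hx hy hxy.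
have [ye|y0] := eqVneq y 0.
  by move: hxy; rewrite ye expr0n (negbTE (lt0n_neq0 m0)) => /eqP; rewrite expf_eq0 m0 => /eqP.
pose z := x / y.
have hz : z ^+ q = z by rewrite /z exprMn exprVn hx hy.
have zm : z ^+ m = 1 by rewrite /z exprMn exprVn hxy divff // expf_neq0.
have z0 : z != 0 by apply: contra_eq_neq zm => ->; rewrite expr0n (negbTE (lt0n_neq0 m0)) eq_sym oner_eq0.
have zq := K_qm1 (ltnW q1) hz z0.
have : z = 1.
  case: (egcdnP (q - 1) m0) => km kn hb _.
  move: cop; rewrite /coprime => /eqP g1; rewrite g1 in hb.
  have : z ^+ (km * m) = z ^+ (kn * (q - 1) + 1) by rewrite hb.
  by rewrite exprD expr1 mulnC exprM zm expr1n mulnC exprM zq expr1n mul1r => <-.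
by move=> h; rewrite -[x](divfK y0) -/z h mul1r.
Qed.


Lemma coprime_of_inj (L : finFieldType) q m : (1 < q)%N -> (0 < m)%N ->
  #|Kset L q| = q ->
  (forall x y : L, x ^+ q = x -> y ^+ q = y -> x ^+ m = y ^+ m -> x = y) ->
  coprime m (q - 1).
Proof.
move=> q1 m0 cK inj; apply/negPn/negP => ncop.
have g1 : (1 < gcdn m (q - 1))%N.
  by rewrite ltn_neqAle eq_sym ncop gcdn_gt0 m0.
set r := pdiv (gcdn m (q - 1)).
have pr : prime r by exact: pdiv_prime.
have rm : (r %| m)%N by apply: dvdn_trans (pdiv_dvd _) (dvdn_gcdl _ _).
have rq : (r %| q - 1)%N by apply: dvdn_trans (pdiv_dvd _) (dvdn_gcdr _ _).
have q10 : (0 < q - 1)%N by rewrite subn_gt0.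
set s := ((q - 1) %/ r)%N.
have s0 : (0 < s)%N by rewrite divn_gt0 ?prime_gt0 // dvdn_leq.
have slt : (s < q - 1)%N by rewrite ltn_Pdiv ?prime_gt1.
have hs x : x \in Kset L q :\ 0 -> x ^+ s = 1.
  rewrite !inE => /andP [x0 /eqP hx].
  have hxs : (x ^+ s) ^+ q = x ^+ s by rewrite -exprM mulnC exprM hx.
  apply: inj => //; first by rewrite expr1n.
  move: rm => /dvdnP [t ->]; rewrite expr1n mulnC exprM -(exprM x).
  by rewrite /s divnK // K_qm1 ?(ltnW q1) // expr1n.
pose P : {poly L} := 'X^s - 1.
have sP : size P = s.+1 by rewrite /P -[1]/(1%:P) size_XnsubC.
have P0 : P != 0 by rewrite -size_poly_eq0 sP.
have := max_poly_roots P0 (rs := enum (Kset L q :\ 0)).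
rewrite enum_uniq -cardE sP ltnS.
have -> : #|Kset L q :\ 0| = (q - 1)%N.
  have := cardsD1 0 (Kset L q); rewrite inK expr0n eqn0Ngt (ltnW q1) /= eqxx cK add1n => h; by rewrite [in RHS]h subn1.
rewrite leqNgt slt => H; suff: false by []; apply: H => //.
by apply/allP => z; rewrite mem_enum => /hs hz; rewrite /root /P !hornerE hz subrr.
Qed.


Lemma inj_card_surj (A B : finType) (D : {set A}) (E : {set B}) (h : A -> B) :
  {in D &, injective h} -> (forall x, x \in D -> h x \in E) -> (#|E| <= #|D|)%N ->
  forall y, y \in E -> exists2 x, x \in D & h x = y.
Proof.
move=> hi hDE hc y yE.
have : h @: D == E.
  rewrite eqEcard card_in_imset // hc andbT; apply/subsetP => _ /imsetP [x xD ->].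
  exact: hDE.
by move=> /eqP hE; move: yE; rewrite -hE => /imsetP [x xD ->]; exists x.
Qed.

Lemma coprime_prod n (m : 'I_n -> nat) r :
  coprime (\prod_(i < n) m i) r <-> (forall i, coprime (m i) r).
Proof.
split.
  by move=> h i; move: h; rewrite (bigD1 i) //= coprimeMl => /andP [].
move=> h; apply: (big_ind (fun x => coprime x r)) => //; first exact: coprime1n.
by move=> x y hx hy; rewrite coprimeMl hx hy.
Qed.

Lemma fixB (L : finFieldType) q (x y : L) : [pchar L].-nat q ->
  x ^+ q = x -> y ^+ q = y -> (x - y) ^+ q = x - y.
Proof. by move=> h hx hy; rewrite exprDn_pchar // exprNn_pchar // hx hy. Qed.


Theorem mainTheorem8 (L : finFieldType) (p k q n : nat)
  (hp : prime p) (hk : (0 < k)%N) (hq : q = (p ^ k)%N) (hn : (0 < n)%N)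
  (hL : #|L| = (q ^ n)%N)
  (f : {poly L}) (hf : is_perm_poly f)
  (m : 'I_n -> nat) (hm : forall i, (0 < m i)%N)
  (a v : 'I_n -> L) :
  is_perm_poly (Fpoly q f a v m) <->
  [/\ coprime (\prod_(i < n) m i) (q - 1),
      is_basis_over_Fq q a & is_basis_over_Fq q v].
Proof.
have pc : p \in [pchar L] by apply: (@card_finPcharP _ p (k * n)) => //; rewrite hL hq expnM.
have hch : [pchar L].-nat q by rewrite hq pnatX (pnatE _ hp) pc; case: (k == 0)%N.
have q1 : (1 < q)%N.
  by rewrite hq (leq_trans (prime_gt1 hp)) // -{1}(expn1 p) leq_pexp2l // prime_gt0.
have q0 : (0 < q)%N by apply: ltnW.
pose Fc (c : 'I_n -> L) := \sum_(i < n) a i * c i ^+ m i.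
pose T (y : L) : {ffun 'I_n -> L} := [ffun i => trq q n (v i * y)].
have hF x : (Fpoly q f a v m).[x] = Fc (T f.[x]).
  rewrite /Fpoly horner_sum /Fc; apply: eq_bigr => i _.
  rewrite hornerZ horner_exp horner_sum ffunE /trq; congr (_ * (_ ^+ _)).
  by apply: eq_bigr => j _; rewrite horner_exp hornerZ.
set K := Kset L q.
have TK y : T y \in ffun_on K by apply/ffun_onP => i; rewrite ffunE inK tr_fix.
case: hf => g fg gf.
split.
- case=> G FG GF.
  have Finj : injective (fun x => (Fpoly q f a v m).[x]) := can_inj FG.
  have Tinj : injective T.
    move=> y y' hT; rewrite -(gf y) -(gf y'); congr (f.[_]); apply: Finj.
    by rewrite /= !hF !gf hT.
  set S := [set c : {ffun 'I_n -> L} | c \in ffun_on K].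
  have cS : #|S| = (#|K| ^ n)%N by rewrite cardsE card_ffun_on card_ord.
  have TS y : T y \in S by rewrite inE TK.
  have cKq : #|K| = q.
    have h1 : (#|L| <= #|S|)%N.
      rewrite -cardsT -(card_imset [set: L] Tinj); apply: subset_leq_card.
      by apply/subsetP => _ /imsetP [y _ ->]; exact: TS.
    rewrite cS hL in h1.
    apply/eqP; rewrite eqn_leq cardK //=; rewrite leqNgt; apply/negP => hlt.
    by move: h1; rewrite leqNgt ltn_exp2r ?hlt.
  rewrite cKq in cS.
  have Tsurj c : c \in S -> exists y, T y = c.
    move=> hc.
    have H1 : {in [set: L] &, injective T} by move=> y y' _ _; apply: Tinj.
    have H2 : forall y, y \in [set: L] -> T y \in S by move=> y _; rewrite TS.
    have H3 : (#|S| <= #|[set: L]|)%N by rewrite cardsT hL cS.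
    by have [y _ <-] := inj_card_surj H1 H2 H3 hc; exists y.
  have K0 : (0 : L) ^+ q = 0 by rewrite expr0n eqn0Ngt q0.
  have pw i (x y : L) : x ^+ q = x -> y ^+ q = y -> x ^+ m i = y ^+ m i -> x = y.
    move=> hx hy hxy.
    pose ex : {ffun 'I_n -> L} := [ffun j => if j == i then x else 0].
    pose ey : {ffun 'I_n -> L} := [ffun j => if j == i then y else 0].
    have exS : ex \in S.
      by rewrite inE; apply/ffun_onP => j; rewrite ffunE inK; case: (j == i); apply/eqP.
    have eyS : ey \in S.
      by rewrite inE; apply/ffun_onP => j; rewrite ffunE inK; case: (j == i); apply/eqP.
    have [yx hx'] := Tsurj ex exS; have [yy hy'] := Tsurj ey eyS.
    have : g yx = g yy.
      apply: Finj; rewrite /= !hF !gf hx' hy' /Fc; apply: eq_bigr => j _.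
      rewrite !ffunE; case: eqP => [->|_]; first by rewrite hxy.
      by rewrite expr0n (negbTE (lt0n_neq0 (hm j))).
    move=> /(congr1 (fun z => f.[z])); rewrite !gf => e.
    have : ex i = ey i by rewrite -hx' -hy' e.
    by rewrite !ffunE eqxx.
  have cop i : coprime (m i) (q - 1) by apply: coprime_of_inj q1 (hm i) cKq (pw i).
  split.
  - by apply/coprime_prod.
  - split.
    + move=> c hc hs i.
      have hd j : exists d : L, d ^+ q = d /\ d ^+ m j = c j.
        have H1 : {in K &, injective (fun x : L => x ^+ m j)}.
          by move=> x y; rewrite !inK => /eqP hx /eqP hy; apply: pw.
        have H2 : forall x, x \in K -> x ^+ m j \in K.
          by move=> x; rewrite !inK => /eqP hx; rewrite -exprM mulnC exprM hx.
        have [|d] := inj_card_surj H1 H2 (leqnn _) (y := c j); first by rewrite inK hc.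
        by rewrite inK => /eqP hdq hdm; exists d.
      have [d hd'] := fin_all_exists hd.
      pose D : {ffun 'I_n -> L} := [ffun j => d j].
      have DS : D \in S.
        by rewrite inE; apply/ffun_onP => j; rewrite ffunE inK; case: (hd' j) => -> _.
      have [y hy] := Tsurj D DS.
      have : g y = g 0.
        apply: Finj; rewrite /= !hF !gf hy /Fc.
        transitivity (0 : L); last first.
          by apply/esym/big1 => j _; rewrite ffunE mulr0 tr0 // expr0n (negbTE (lt0n_neq0 (hm j))) mulr0.
        rewrite -[RHS]hs; apply: eq_bigr => j _; rewrite ffunE mulrC; by case: (hd' j) => _ ->.
      move=> /(congr1 (fun z => f.[z])); rewrite !gf => y0.
      have : D i = T 0 i by rewrite -y0 hy.
      rewrite !ffunE mulr0 tr0 // => di0.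
      by case: (hd' i) => _ <-; rewrite di0 expr0n (negbTE (lt0n_neq0 (hm i))).
    + move=> x; exists (fun i => T f.[G x] i ^+ m i); split.
        by move=> i; rewrite /inFq -exprM mulnC exprM ffunE tr_fix.
      rewrite -{1}(GF x) hF /Fc; apply: eq_bigr => i _; by rewrite mulrC.
  - have vind : forall c : 'I_n -> L, (forall i, inFq q (c i)) ->
        \sum_(i < n) c i * v i = 0 -> forall i, c i = 0.
      move=> c hc hs j.
      pose ej : {ffun 'I_n -> L} := [ffun i => (i == j)%:R].
      have ejS : ej \in S.
        by rewrite inE; apply/ffun_onP => i; rewrite ffunE inK; case: (i == j); rewrite ?expr1n ?K0.
      have [y hy] := Tsurj ej ejS.
      have ty i : trq q n (v i * y) = ej i by rewrite -hy ffunE.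
      have : trq q n ((\sum_(i < n) c i * v i) * y) = c j.
        rewrite mulr_suml tr_sum //.
        transitivity (\sum_(i < n) c i * ej i).
          by apply: eq_bigr => i _; rewrite -mulrA trZ ?ty //; apply: hc.
        rewrite (bigD1 j) //= ffunE eqxx mulr1 big1 ?addr0 // => i /negbTE hij.
        by rewrite ffunE hij mulr0.
      by rewrite hs mul0r tr0.
    split => // x.
    set S' := S.
    pose C (c : {ffun 'I_n -> L}) := \sum_(i < n) c i * v i.
    have H1 : {in S &, injective C}.
      move=> c c'; rewrite !inE => /ffun_onP hc /ffun_onP hc' hcc.
      apply/ffunP => i; apply/eqP; rewrite -subr_eq0; apply/eqP.
      move: i; apply: (vind (fun i => c i - c' i)).
        move=> i; apply: fixB => //; [move: (hc i) | move: (hc' i)]; by rewrite inK => /eqP.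
      rewrite -[RHS](subrr (C c)) {2}hcc /C -sumrB; apply: eq_bigr => i _; by rewrite mulrBl.
    have H2 : forall c, c \in S -> C c \in [set: L] by move=> c _; rewrite inE.
    have H3 : (#|[set: L]| <= #|S|)%N by rewrite cardsT hL cS.
    have [c cS' <-] := inj_card_surj H1 H2 H3 (y := x) (in_setT x).
    exists c; split => //.
    by move=> i; move: cS'; rewrite inE => /ffun_onP /(_ i); rewrite inK => /eqP.
- case=> hcop [aind _] [_ vspan].
  have cop i : coprime (m i) (q - 1) by move/coprime_prod: hcop.
  apply: injF_bij => x x'; rewrite /= !hF => hFF.
  have hc y i : (T y i ^+ m i) ^+ q = T y i ^+ m i.
    by rewrite -exprM mulnC exprM ffunE tr_fix.
  have e1 i : T f.[x] i ^+ m i = T f.[x'] i ^+ m i.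
    apply/eqP; rewrite -subr_eq0; apply/eqP; move: i.
    apply: (aind (fun i => T f.[x] i ^+ m i - T f.[x'] i ^+ m i)).
      by move=> i; apply: fixB.
    transitivity (Fc (T f.[x]) - Fc (T f.[x'])); last by rewrite hFF subrr.
    rewrite /Fc -sumrB; apply: eq_bigr => i _. by rewrite [LHS]mulrC mulrBr.
  have e2 i : T f.[x] i = T f.[x'] i.
    by apply: (pow_inj q1 (hm i) (cop i)); [rewrite ffunE tr_fix | rewrite ffunE tr_fix | exact: e1].

  have e3 z : trq q n (z * (f.[x] - f.[x'])) = 0.
    have [c [hc' ->]] := vspan z.
    rewrite mulr_suml tr_sum // big1 // => i _; rewrite -mulrA trZ; last exact: hc'.
    rewrite mulrDr mulrN trB //.
    by have := e2 i; rewrite !ffunE => ->; rewrite subrr mulr0.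
  have : f.[x] - f.[x'] = 0.
    apply/eqP; apply/negPn/negP => d0.
    have [w hw] := tr_nz q1 hn hL.
    by move/eqP: (e3 (w / (f.[x] - f.[x']))); rewrite divfK // (negbTE hw).
  move/eqP; rewrite subr_eq0 => /eqP h.
  by rewrite -(fg x) h fg.
Qed.
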